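(* Let $(u^{(\tau)},v^{(\tau)})$ be a time-splitting solution with mesh $\tau>0$. For all integers $j_1$ and $0\le n_0\le n\le n_1$, $$\sum_{j=j_1-n_1+n}^{j_1+n_1-n}\big(|u_j^n|^2+|v_j^n|^2\big)\le\sum_{j=j_1-n_1+n_0}^{j_1+n_1-n_0}\big(|u_j^{n_0}|^2+|v_j^{n_0}|^2\big),$$ and $$\sum_{k=0}^{n_1-n_0}|u_{j_1+k}^{n_1-k}|^2+\sum_{k=0}^{n_1-n_0}|v_{j_1-k}^{n_1-k}|^2\le\sum_{j=j_1-n_1+n_0}^{j_1+n_1-n_0}\big(|u_j^{n_0}|^2+|v_j^{n_0}|^2\big).$$
   Context: Fix constants $m\ge 0$ and $\alpha,\beta\in\mathbb{R}$. Let (N) denote the ODE system on $\mathbb{C}^2$: $\frac{du}{ds}=imv+i\alpha u|v|^2+2i\beta(\bar u v+u\bar v)v$, $\frac{dv}{ds}=imu+i\alpha v|u|^2+2i\beta(\bar u v+u\bar v)u$. Time-splitting scheme with mesh $\tau>0$: given $(u_j^0,v_j^0)_{j\in\mathbb{Z}}\subset\mathbb{C}^2$ with $\sum_j(|u_j^0|^2+|v_j^0|^2)<\infty$, set $(u^{(\tau)},v^{(\tau)})(x,0)=(u_j^0,v_j^0)$ for $x\in[j\tau,(j+1)\tau)$. Inductively, once $(u^{(\tau)},v^{(\tau)})(\cdot,n\tau)$ is defined, set for $t\in[n\tau,(n+1)\tau)$: $u^{(\tau)}(x,t)=u^{(\tau)}(x-(t-n\tau),n\tau)$, $v^{(\tau)}(x,t)=v^{(\tau)}(x+(t-n\tau),n\tau)$;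 let $(u^{(\tau)},v^{(\tau)})(x,(n+1)\tau-)$ be the left limit in $t$; and for each $x$ define $(u^{(\tau)},v^{(\tau)})(x,(n+1)\tau)$ as the value at $s=\tau$ of the solution of (N) with value $(u^{(\tau)},v^{(\tau)})(x,(n+1)\tau-)$ at $s=0$ (this is globally well defined). Notation: $(u_j^n,v_j^n)=(u^{(\tau)},v^{(\tau)})(j\tau,n\tau)$. The discrete characteristic triangle is $\Delta(j_1,n_1;n_0)=\{(j,n)\in\mathbb{Z}^2: n_0\le n\le n_1,\ j_1-n_1+n\le j\le j_1+n_1-n\}$. *)

(* Defs.v *)
From Stdlib Require Import Reals ZArith List.
From Coquelicot Require Import Coquelicot.
Open Scope R_scope.

Definition abs2 (z : C) : R := Cmod z ^ 2.

Definition N_rhs_u (m alpha beta : R) (u v : C) : C :=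
  (Ci * (RtoC m * v) + Ci * (RtoC alpha * u * RtoC (abs2 v))
   + RtoC 2 * Ci * RtoC beta * (Cconj u * v + u * Cconj v) * v)%C.
Definition N_rhs_v (m alpha beta : R) (u v : C) : C :=
  (Ci * (RtoC m * u) + Ci * (RtoC alpha * v * RtoC (abs2 u))
   + RtoC 2 * Ci * RtoC beta * (Cconj u * v + u * Cconj v) * u)%C.

Definition solves_N_on (m alpha beta tau : R) (P Q : R -> C) : Prop :=
  forall s, 0 <= s <= tau ->
    is_derive P s (N_rhs_u m alpha beta (P s) (Q s)) /\
    is_derive Q s (N_rhs_v m alpha beta (P s) (Q s)).

(* One step = transport (u shifts one cell to
   the right, v one cell to the left) followed by the flow of (N) for time tau. *)
Definition time_splitting (m alpha beta tau : R) (u v : nat -> Z -> C) : Prop :=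
  forall (n : nat) (j : Z), exists P Q : R -> C,
    solves_N_on m alpha beta tau P Q /\
    P 0 = u n (j - 1)%Z /\ Q 0 = v n (j + 1)%Z /\
    u (S n) j = P tau /\ v (S n) j = Q tau.

Definition l2_data (u0 v0 : Z -> C) : Prop :=
  exists M : R, forall N : nat,
    fold_right Rplus 0
      (map (fun i => abs2 (u0 (Z.of_nat i - Z.of_nat N)%Z) + abs2 (v0 (Z.of_nat i - Z.of_nat N)%Z))
           (seq 0 (2 * N + 1))) <= M.

(* zsum a b f = sum_{j=a}^{b} f j (zero if b < a). *)
Definition zsum (a b : Z) (f : Z -> R) : R :=
  fold_right Rplus 0 (map (fun i => f (a + Z.of_nat i)%Z) (seq 0 (Z.to_nat (b - a + 1)))).

(* Main.v *)
Require Import Defs.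
From Stdlib Require Import Reals ZArith List Lra Lia.
From Coquelicot Require Import Coquelicot.
Open Scope R_scope.

Lemma abs2_eq z : abs2 z = fst z ^ 2 + snd z ^ 2.
Proof. unfold abs2, Cmod. rewrite pow2_sqrt; [ring|]. nra. Qed.

Lemma derive_fst (P : R -> C) s l : is_derive P s l -> is_derive (fun t => fst (P t)) s (fst l).
Proof.
  intro H. unfold is_derive in *.
  eapply filterdiff_ext_lin.
  - apply (filterdiff_comp' P (fun t : C => fst t) s _ (fun t : C => fst t) H).
    apply filterdiff_linear. apply (@is_linear_fst R_AbsRing R_NormedModule R_NormedModule).
  - intros y. simpl. reflexivity.
Qed.

Lemma derive_snd (P : R -> C) s l : is_derive P s l -> is_derive (fun t => snd (P t)) s (snd l).
Proof.
  intro H. unfold is_derive in *.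
  eapply filterdiff_ext_lin.
  - apply (filterdiff_comp' P (fun t : C => snd t) s _ (fun t : C => snd t) H).
    apply filterdiff_linear. apply (@is_linear_snd R_AbsRing R_NormedModule R_NormedModule).
  - intros y. simpl. reflexivity.
Qed.

Lemma rhs_zero m alpha beta p1 p2 q1 q2 :
  let U := N_rhs_u m alpha beta (p1,p2) (q1,q2) in
  let V := N_rhs_v m alpha beta (p1,p2) (q1,q2) in
  2 * p1 * fst U + 2 * p2 * snd U + 2 * q1 * fst V + 2 * q2 * snd V = 0.
Proof.
  intros U V. unfold U, V, N_rhs_u, N_rhs_v. rewrite !abs2_eq. simpl. ring.
Qed.

Lemma conservation m alpha beta tau P Q : 0 < tau -> solves_N_on m alpha beta tau P Q ->
  abs2 (P tau) + abs2 (Q tau) = abs2 (P 0) + abs2 (Q 0).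
Proof.
  intros Ht HS.
  set (E := fun t => fst (P t) ^ 2 + snd (P t) ^ 2 + (fst (Q t) ^ 2 + snd (Q t) ^ 2)).
  assert (HD : forall t, 0 <= t <= tau -> is_derive E t 0).
  { intros t Ht'. destruct (HS t Ht') as [H1 H2].
    unfold E.
    replace 0 with ((INR 2 * fst (N_rhs_u m alpha beta (P t) (Q t)) * fst (P t) ^ Init.Nat.pred 2
       + INR 2 * snd (N_rhs_u m alpha beta (P t) (Q t)) * snd (P t) ^ Init.Nat.pred 2)
     + (INR 2 * fst (N_rhs_v m alpha beta (P t) (Q t)) * fst (Q t) ^ Init.Nat.pred 2
       + INR 2 * snd (N_rhs_v m alpha beta (P t) (Q t)) * snd (Q t) ^ Init.Nat.pred 2)).
    - pose proof (is_derive_pow _ 2 _ _ (derive_fst _ _ _ H1)) as A1.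
      pose proof (is_derive_pow _ 2 _ _ (derive_snd _ _ _ H1)) as A2.
      pose proof (is_derive_pow _ 2 _ _ (derive_fst _ _ _ H2)) as A3.
      pose proof (is_derive_pow _ 2 _ _ (derive_snd _ _ _ H2)) as A4.
      exact (is_derive_plus _ _ _ _ _ (is_derive_plus _ _ _ _ _ A1 A2) (is_derive_plus _ _ _ _ _ A3 A4)).
    - destruct (P t) as [p1 p2]; destruct (Q t) as [q1 q2].
      pose proof (rhs_zero m alpha beta p1 p2 q1 q2) as Z. simpl in Z |- *.
      simpl. lra. }
  destruct (MVT_gen E 0 tau (fun _ => 0)) as [c [_ Hc]].
  - intros x Hx. rewrite Rmin_left in Hx by lra. rewrite Rmax_right in Hx by lra.
    apply HD; lra.
  - intros x Hx. rewrite Rmin_left in Hx by lra. rewrite Rmax_right in Hx by lra.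
    apply continuity_pt_filterlim. apply (ex_derive_continuous E).
    eexists. apply HD; lra.
  - unfold E in Hc. rewrite !abs2_eq. lra.
Qed.

Definition zs (L : Z) (len : nat) (f : Z -> R) : R :=
  fold_right Rplus 0 (map (fun i => f (L + Z.of_nat i)%Z) (seq 0 len)).

Lemma zs_0 L f : zs L 0 f = 0.
Proof. reflexivity. Qed.

Lemma zs_S_r L len f : zs L (S len) f = zs L len f + f (L + Z.of_nat len)%Z.
Proof.
  unfold zs. rewrite seq_S, map_app, fold_right_app. simpl.
  generalize (f (L + Z.of_nat len)%Z). intro r.
  induction (map (fun i => f (L + Z.of_nat i)%Z) (seq 0 len)); simpl; [ring|]. rewrite IHl. ring.
Qed.

Lemma zs_S_l L len f : zs L (S len) f = f L + zs (L+1) len f.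
Proof.
  induction len.
  - rewrite zs_S_r, !zs_0. replace (L + Z.of_nat 0)%Z with L by lia. ring.
  - rewrite zs_S_r, IHlen, zs_S_r.
    replace (L + Z.of_nat (S len))%Z with (L + 1 + Z.of_nat len)%Z by lia. ring.
Qed.

Lemma zs_plus L len f g : zs L len (fun j => f j + g j) = zs L len f + zs L len g.
Proof. induction len; [rewrite !zs_0; ring|]. rewrite !zs_S_r, IHlen. ring. Qed.

Lemma zs_shift L len f k : zs L len (fun j => f (j + k)%Z) = zs (L + k) len f.
Proof.
  unfold zs. f_equal. apply map_ext. intro i. f_equal. lia.
Qed.

Lemma zs_nonneg L len f : (forall j, 0 <= f j) -> 0 <= zs L len f.
Proof. intro H. induction len; [rewrite zs_0; lra|]. rewrite zs_S_r. specialize (H (L + Z.of_nat len)%Z). lra. Qed.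

Lemma abs2_nonneg z : 0 <= abs2 z.
Proof. unfold abs2. apply pow2_ge_0. Qed.

Section Main.
Variables (u v : nat -> Z -> C).
Hypothesis Hstep : forall n j, abs2 (u (S n) j) + abs2 (v (S n) j) = abs2 (u n (j-1)%Z) + abs2 (v n (j+1)%Z).
Variables (j1 : Z) (n1 : nat).

Definition Sn (n : nat) := zsum (j1 - Z.of_nat n1 + Z.of_nat n) (j1 + Z.of_nat n1 - Z.of_nat n)
         (fun j => abs2 (u n j) + abs2 (v n j)).

Lemma Sn_zs n : (n <= n1)%nat -> Sn n = zs (j1 - Z.of_nat n1 + Z.of_nat n) (2*(n1-n)+1)
         (fun j => abs2 (u n j) + abs2 (v n j)).
Proof.
  intro H. unfold Sn, zsum, zs. f_equal. f_equal. f_equal. lia.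
Qed.

Lemma step n : (n < n1)%nat ->
  Sn (S n) + abs2 (u n (j1 + Z.of_nat n1 - Z.of_nat n)%Z) + abs2 (v n (j1 - Z.of_nat n1 + Z.of_nat n)%Z) <= Sn n.
Proof.
  intro H. rewrite !Sn_zs by lia.
  set (L := (j1 - Z.of_nat n1 + Z.of_nat n)%Z).
  set (l := (2 * (n1 - S n) + 1)%nat).
  replace (2 * (n1 - n) + 1)%nat with (S (S l)) by (unfold l; lia).
  replace (j1 - Z.of_nat n1 + Z.of_nat (S n))%Z with (L + 1)%Z by (unfold L; lia).
  rewrite (zs_plus L).
  rewrite zs_S_r, zs_S_r.
  rewrite (zs_S_l L (S l) (fun j => abs2 (v n j))), zs_S_l.
  assert (E : zs (L + 1) l (fun j => abs2 (u (S n) j) + abs2 (v (S n) j))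
     = zs L l (fun j => abs2 (u n j)) + zs (L + 1 + 1) l (fun j => abs2 (v n j))).
  { transitivity (zs (L+1) l (fun j => abs2 (u n (j-1)%Z) + abs2 (v n (j+1)%Z))).
    { unfold zs. f_equal. apply map_ext. intro. apply Hstep. }
    rewrite zs_plus. f_equal.
    - rewrite <- (zs_shift L l _ 1). unfold zs. f_equal. apply map_ext. intro. f_equal. f_equal. lia.
    - rewrite <- (zs_shift (L+1) l _ 1). reflexivity. }
  rewrite E.
  replace (j1 + Z.of_nat n1 - Z.of_nat n)%Z with (L + Z.of_nat (S l))%Z by (unfold L, l; lia).
  pose proof (abs2_nonneg (u n (L + Z.of_nat l)%Z)).
  pose proof (abs2_nonneg (v n (L + 1)%Z)).
  lra.
Qed.

Lemma ineq1 n0 i : (n0 + i <= n1)%nat -> Sn (n0 + i) <= Sn n0.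
Proof.
  induction i; intro H.
  - rewrite Nat.add_0_r. lra.
  - pose proof (step (n0 + i) ltac:(lia)).
    rewrite <- plus_n_Sm.
    pose proof (abs2_nonneg (u (n0+i)%nat (j1 + Z.of_nat n1 - Z.of_nat (n0 + i))%Z)).
    pose proof (abs2_nonneg (v (n0+i)%nat (j1 - Z.of_nat n1 + Z.of_nat (n0 + i))%Z)).
    specialize (IHi ltac:(lia)). lra.
Qed.

Lemma ineq2 d : (d <= n1)%nat ->
  sum_f_R0 (fun k => abs2 (u (n1 - k)%nat (j1 + Z.of_nat k)%Z) + abs2 (v (n1 - k)%nat (j1 - Z.of_nat k)%Z)) d
  <= Sn (n1 - d).
Proof.
  induction d; intro H.
  - simpl sum_f_R0. rewrite Nat.sub_0_r. rewrite Sn_zs by lia.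
    replace (2 * (n1 - n1) + 1)%nat with 1%nat by lia.
    rewrite zs_S_r, zs_0.
    replace (j1 - Z.of_nat n1 + Z.of_nat n1 + Z.of_nat 0)%Z with (j1 + Z.of_nat 0)%Z by lia.
    change (Z.of_nat 0) with 0%Z. rewrite ?Z.add_0_r, ?Z.sub_0_r. lra.
  - simpl sum_f_R0. specialize (IHd ltac:(lia)).
    pose proof (step (n1 - S d) ltac:(lia)) as St.
    replace (S (n1 - S d)) with (n1 - d)%nat in St by lia.
    replace (j1 + Z.of_nat n1 - Z.of_nat (n1 - S d))%Z with (j1 + Z.of_nat (S d))%Z in St by lia.
    replace (j1 - Z.of_nat n1 + Z.of_nat (n1 - S d))%Z with (j1 - Z.of_nat (S d))%Z in St by lia.
    change (Z.pos (PosDef.Pos.of_succ_nat d)) with (Z.of_nat (S d)). lra.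
Qed.
End Main.

Theorem lemma2p3 (m alpha beta tau : R) (u v : nat -> Z -> C) :
  0 <= m -> 0 < tau ->
  l2_data (u 0%nat) (v 0%nat) ->
  time_splitting m alpha beta tau u v ->
  forall (j1 : Z) (n0 n n1 : nat), (n0 <= n)%nat -> (n <= n1)%nat ->
    zsum (j1 - Z.of_nat n1 + Z.of_nat n) (j1 + Z.of_nat n1 - Z.of_nat n)
         (fun j => abs2 (u n j) + abs2 (v n j))
    <= zsum (j1 - Z.of_nat n1 + Z.of_nat n0) (j1 + Z.of_nat n1 - Z.of_nat n0)
         (fun j => abs2 (u n0 j) + abs2 (v n0 j)) /\
    sum_f_R0 (fun k => abs2 (u (n1 - k)%nat (j1 + Z.of_nat k)%Z)) (n1 - n0)
    + sum_f_R0 (fun k => abs2 (v (n1 - k)%nat (j1 - Z.of_nat k)%Z)) (n1 - n0)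
    <= zsum (j1 - Z.of_nat n1 + Z.of_nat n0) (j1 + Z.of_nat n1 - Z.of_nat n0)
         (fun j => abs2 (u n0 j) + abs2 (v n0 j)).
Proof.
  intros Hm Ht _ HTS j1 n0 n n1 H1 H2.
  assert (Hstep : forall n j, abs2 (u (S n) j) + abs2 (v (S n) j) = abs2 (u n (j-1)%Z) + abs2 (v n (j+1)%Z)).
  { intros k j. destruct (HTS k j) as [P [Q [HS [E1 [E2 [E3 E4]]]]]].
    rewrite E3, E4, <- E1, <- E2. apply (conservation m alpha beta); assumption. }
  split.
  - pose proof (ineq1 u v Hstep j1 n1 n0 (n - n0) ltac:(lia)) as I.
    replace (n0 + (n - n0))%nat with n in I by lia. exact I.
  - rewrite <- plus_sum.
    pose proof (ineq2 u v Hstep j1 n1 (n1 - n0) ltac:(lia)) as I.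
    replace (n1 - (n1 - n0))%nat with n0 in I by lia. exact I.
Qed.
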